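(* Let $(\mathcal{A},\mathcal{E})$ be a finite, essentially small exact category. For a nonzero object $X$ define $\mu_\mathcal{E}(X)=\max\{\mu_\mathcal{E}(X') : X'\text{ indecomposable},\ X'\subset_\mathcal{E}X\}$ (maximum in $(\mathfrak{S}(\mathbb{N}),\lll)$); this agrees with $\mu_\mathcal{E}$ on indecomposable objects. Then this extended map is a measure on the poset of isomorphism classes of nonzero objects ordered by $\subset_\mathcal{E}$, i.e. $X\subset_\mathcal{E}Y$ implies $\mu_\mathcal{E}(X)\lll\mu_\mathcal{E}(Y)$.
   Context: $(\mathcal{A},\mathcal{E})$ is a Quillen exact category; admissible monics are morphisms $i$ with $(i,d)\in\mathcal{E}$ for some $d$. $X\subset_\mathcal{E}Y$ means there is an admissible monic $X\to Y$; $X\subsetneq_\mathcal{E}Y$ means there is one that is not an isomorphism. The $\mathcal{E}$-length $l_\mathcal{E}(X)$ is the supremum of all $n$ such that there is a chain $0=X_0\to\cdots\to X_n=X$ of admissible monics none of which is an isomorphism; $(\mathcal{A},\mathcal{E})$ is finite if $l_\mathcal{E}(X)<\infty$ for all $X$; in that case $\subset_\mathcal{E}$ is a partial order on isomorphism classes. $\mathfrak{S}(\mathbb{N})$ is the set of finite nonempty sequences of natural numbers, totally ordered by: $x\lll y$ iff $x=y$, or $x$ is a proper prefix of $y$, or at the first index $i$ where $x_i\neq y_i$ (both defined) one has $x_i>y_i$. For indecomposable $X$, $\mu_\mathcal{E}(X)$ is the $\lll$-maximum of $(l_\mathcal{E}(X_1),\dots,l_\mathcal{E}(X_n))$ over all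 chains $X_1\subsetneq_\mathcal{E}\cdots\subsetneq_\mathcal{E}X_n=X$ ($n\ge1$) with all $X_i$ indecomposable. A measure is an order-preserving map from a poset to a totally ordered set. *)

(* Defs.v *)
(* exact categories set up from scratch (no category-theory
   library is installed).  Composition is written in diagrammatic order:
   [cmp f g] is "first f, then g". *)
From HB Require Import structures.
From mathcomp Require Import all_boot all_order all_algebra.
Set Implicit Arguments. Unset Strict Implicit. Unset Printing Implicit Defensive.
Import GRing.Theory.
Local Open Scope ring_scope.

Record precat := PreCat {
  Obj : Type;
  Hom : Obj -> Obj -> zmodType;
  cmp : forall X Y Z : Obj, Hom X Y -> Hom Y Z -> Hom X Z;
  idm : forall X : Obj, Hom X X;
  cmpA : forall X Y Z W (f : Hom X Y) (g : Hom Y Z) (h : Hom Z W),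
      cmp (cmp f g) h = cmp f (cmp g h);
  cmp1l : forall X Y (f : Hom X Y), cmp (idm X) f = f;
  cmp1r : forall X Y (f : Hom X Y), cmp f (idm Y) = f;
  cmpDl : forall X Y Z (f g : Hom X Y) (h : Hom Y Z),
      cmp (f + g) h = cmp f h + cmp g h;
  cmpDr : forall X Y Z (f : Hom X Y) (g h : Hom Y Z),
      cmp f (g + h) = cmp f g + cmp f h
}.
Arguments cmp {p X Y Z}.
Arguments idm {p}.

Section Notions.
Variable C : precat.
Local Notation Ob := (Obj C).
Local Notation "f ;; g" := (cmp f g) (at level 40, left associativity).

Definition is_zero (X : Ob) : Prop := idm X = 0.

Definition is_iso (X Y : Ob) (f : Hom X Y) : Prop :=
  exists g : Hom Y X, f ;; g = idm X /\ g ;; f = idm Y.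

Definition is_biproduct (A B S : Ob) : Prop :=
  exists (i1 : Hom A S) (i2 : Hom B S) (p1 : Hom S A) (p2 : Hom S B),
    [/\ i1 ;; p1 = idm A, i2 ;; p2 = idm B, i1 ;; p2 = 0, i2 ;; p1 = 0
      & p1 ;; i1 + p2 ;; i2 = idm S].

Definition is_kernel (X Y Z : Ob) (i : Hom X Y) (d : Hom Y Z) : Prop :=
  i ;; d = 0 /\
  forall W (f : Hom W Y), f ;; d = 0 ->
    exists g : Hom W X, g ;; i = f /\ forall g' : Hom W X, g' ;; i = f -> g' = g.

Definition is_cokernel (X Y Z : Ob) (d : Hom Y Z) (i : Hom X Y) : Prop :=
  i ;; d = 0 /\
  forall W (f : Hom Y W), i ;; f = 0 ->
    exists g : Hom Z W, d ;; g = f /\ forall g' : Hom Z W, d ;; g' = f -> g' = g.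

Definition is_pushout (X Y X' Y' : Ob) (i : Hom X Y) (f : Hom X X')
    (f' : Hom Y Y') (i' : Hom X' Y') : Prop :=
  i ;; f' = f ;; i' /\
  forall W (g : Hom Y W) (h : Hom X' W), i ;; g = f ;; h ->
    exists u : Hom Y' W, (f' ;; u = g /\ i' ;; u = h) /\
      forall u' : Hom Y' W, f' ;; u' = g -> i' ;; u' = h -> u' = u.

Definition is_pullback (Y Z Y' Z' : Ob) (d : Hom Y Z) (f : Hom Z' Z)
    (f' : Hom Y' Y) (d' : Hom Y' Z') : Prop :=
  f' ;; d = d' ;; f /\
  forall W (g : Hom W Y) (h : Hom W Z'), g ;; d = h ;; f ->
    exists u : Hom W Y', (u ;; f' = g /\ u ;; d' = h) /\
      forall u' : Hom W Y', u' ;; f' = g -> u' ;; d' = h -> u' = u.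

End Notions.

Record addcat := AddCat {
  acat :> precat;
  has_zero : exists Z : Obj acat, is_zero Z;
  has_biproducts : forall A B : Obj acat, exists S, is_biproduct A B S
}.

Record exactcat := ExactCat {
  ecat :> addcat;
  Ex : forall X Y Z : Obj ecat, Hom X Y -> Hom Y Z -> Prop;
  Ex_kercoker : forall X Y Z (i : Hom X Y) (d : Hom Y Z),
      Ex i d -> is_kernel i d /\ is_cokernel d i;
  Ex_iso : forall X Y Z X' Y' Z' (i : Hom X Y) (d : Hom Y Z)
      (i' : Hom X' Y') (d' : Hom Y' Z')
      (a : Hom X' X) (b : Hom Y' Y) (c : Hom Z' Z),
      Ex i d -> is_iso a -> is_iso b -> is_iso c ->
      cmp i' b = cmp a i -> cmp d' c = cmp b d -> Ex i' d';
  Ex_E0 : forall A : Obj ecat, exists Z (d : Hom A Z), Ex (idm A) d;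
  Ex_E0op : forall A : Obj ecat, exists Z (i : Hom Z A), Ex i (idm A);
  Ex_E1 : forall X Y Z (i : Hom X Y) (j : Hom Y Z),
      (exists W (d : Hom Y W), Ex i d) -> (exists W (d : Hom Z W), Ex j d) ->
      exists W (d : Hom Z W), Ex (cmp i j) d;
  Ex_E1op : forall X Y Z (p : Hom X Y) (q : Hom Y Z),
      (exists W (i : Hom W X), Ex i p) -> (exists W (i : Hom W Y), Ex i q) ->
      exists W (i : Hom W X), Ex i (cmp p q);
  Ex_E2 : forall X Y X' (i : Hom X Y) (f : Hom X X'),
      (exists W (d : Hom Y W), Ex i d) ->
      exists Y' (f' : Hom Y Y') (i' : Hom X' Y'),
        is_pushout i f f' i' /\ exists W (d : Hom Y' W), Ex i' d;
  Ex_E2op : forall Y Z Z' (d : Hom Y Z) (f : Hom Z' Z),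
      (exists W (i : Hom W Y), Ex i d) ->
      exists Y' (f' : Hom Y' Y) (d' : Hom Y' Z'),
        is_pullback d f f' d' /\ exists W (i : Hom W Y'), Ex i d'
}.

Section ExactNotions.
Variable E : exactcat.
Local Notation Ob := (Obj E).

Definition adm_monic (X Y : Ob) (i : Hom X Y) : Prop :=
  exists Z (d : Hom Y Z), Ex i d.

Definition subE (X Y : Ob) : Prop := exists i : Hom X Y, adm_monic i.
Definition psubE (X Y : Ob) : Prop :=
  exists i : Hom X Y, adm_monic i /\ ~ is_iso i.

Inductive chainE : Ob -> nat -> Prop :=
| chainE0 : forall X, is_zero X -> chainE X 0
| chainES : forall X Y n, chainE X n -> psubE X Y -> chainE Y n.+1.

Definition lengthE (X : Ob) (n : nat) : Prop :=
  chainE X n /\ forall m, chainE X m -> (m <= n)%N.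

Definition finiteE : Prop :=
  forall X : Ob, exists N : nat, forall n, chainE X n -> (n <= N)%N.

Definition indecomposable (X : Ob) : Prop :=
  ~ is_zero X /\ forall A B : Ob, is_biproduct A B X -> is_zero A \/ is_zero B.

Inductive ichain : Ob -> seq nat -> Prop :=
| ichain1 : forall X n, indecomposable X -> lengthE X n -> ichain X [:: n]
| ichainS : forall X Y s n, ichain X s -> psubE X Y -> indecomposable Y ->
    lengthE Y n -> ichain Y (rcons s n).

End ExactNotions.

(* the total order <<< on finite sequences of naturals:
   x <<< y iff x = y, or x is a proper prefix of y, or at the first index where
   they differ x_i > y_i *)
Fixpoint lll (x y : seq nat) : bool :=
  match x, y with
  | [::], _ => true
  | _ :: _, [::] => false
  | a :: x', b :: y' => (b < a)%N || ((a == b) && lll x' y')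
  end.

Definition is_mu (E : exactcat) (X : Obj E) (s : seq nat) : Prop :=
  ichain X s /\ forall t, ichain X t -> lll t s.

Definition is_mu_ext (E : exactcat) (X : Obj E) (s : seq nat) : Prop :=
  (exists X', [/\ indecomposable X', subE X' X & is_mu X' s]) /\
  forall X' t, indecomposable X' -> subE X' X -> is_mu X' t -> lll t s.

(* Main.v *)
Require Import Defs.
From mathcomp Require Import all_boot all_order all_algebra.
From mathcomp Require Import zify.
From Stdlib Require Import Classical.

Import GRing.Theory.
Set Implicit Arguments.

Local Notation "f ;; g" := (cmp f g) (at level 40, left associativity).

Lemma lll_cat x y : lll x (x ++ y).
Proof. by elim: x => //= a x IH; rewrite eqxx IH orbT. Qed.

Lemma lll_refl x : lll x x.
Proof. by have := lll_cat x [::]; rewrite cats0. Qed.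

Lemma lll_total x y : lll x y || lll y x.
Proof.
elim: x y => [|a x IH] [|b y] //=.
have [h|h|h] := ltngtP a b.
- by [].
- by [].
- by rewrite /= IH.
Qed.

Lemma lll_trans x y z : lll x y -> lll y z -> lll x z.
Proof.
elim: x y z => [|a x IH] [|b y] [|c z] //=.
move=> /orP [hba | /andP [/eqP hab hxy]] /orP [hcb | /andP [/eqP hbc hyz]].
- by rewrite (ltn_trans hcb hba).
- by rewrite -hbc hba.
- by rewrite hab hcb.
- by rewrite hab -hbc eqxx (IH _ _ hxy hyz) orbT.
Qed.

Lemma lll_anti x y : lll x y -> lll y x -> x = y.
Proof.
elim: x y => [|a x IH] [|b y] //=.
move=> /orP [h1 | /andP [/eqP e1 h1]] /orP [h2 | /andP [/eqP e2 h2]].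
- exfalso; lia.
- exfalso; lia.
- exfalso; lia.
- by subst; rewrite (IH _ h1 h2).
Qed.

Lemma lll_max (l : seq (seq nat)) (P : seq nat -> Prop) :
  (exists x, x \in l /\ P x) ->
  exists m, P m /\ forall x, x \in l -> P x -> lll x m.
Proof.
elim: l => [|a l IH] [x [hx hP]]; first by rewrite in_nil in hx.
case: (classic (exists y, y \in l /\ P y)) => [hex | hno].
- have [m [hm hmax]] := IH hex.
  case: (classic (P a)) => hPa.
  + case/orP: (lll_total a m) => ham.
    * exists m; split=> // y; rewrite in_cons => /orP [/eqP -> | hy] hPy //.
      exact: hmax.
    * exists a; split => // y; rewrite in_cons => /orP [/eqP -> | hy] hPy.
        exact: lll_refl.
      exact: lll_trans (hmax y hy hPy) ham.
  + exists m; split => // y; rewrite in_cons => /orP [/eqP hya | hy] hPy.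
      by subst.
    exact: hmax.
- have hPa : P a.
    move: hx; rewrite in_cons => /orP [/eqP <- // | hx].
    by exfalso; apply: hno; exists x.
  exists a; split=> // y; rewrite in_cons => /orP [/eqP -> | hy] hPy.
    exact: lll_refl.
  by exfalso; apply: hno; exists y.
Qed.

Fixpoint allsubs (s : seq nat) : seq (seq nat) :=
  if s is x :: s' then [seq x :: t | t <- allsubs s'] ++ allsubs s'
  else [:: [::]].

Lemma allsubsP s t : subseq t s -> t \in allsubs s.
Proof.
elim: s t => [|x s IH] t.
- by rewrite subseq0 => /eqP ->; rewrite inE.
- case: t => [|y t] /=.
  + move=> _; rewrite mem_cat; apply/orP; right; apply: IH; exact: sub0seq.
  + case: eqP => [-> h | _ h]; rewrite mem_cat; apply/orP.
      by left; apply: map_f; exact: IH.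
    by right; exact: IH.
Qed.

Lemma iota_sub m n : (m <= n)%N -> subseq (iota 0 m) (iota 0 n).
Proof.
move=> h; rewrite -(subnKC h) iotaD -{1}[iota 0 m]cats0.
apply: cat_subseq; [exact: subseq_refl | exact: sub0seq].
Qed.

Lemma prop_max (P : nat -> Prop) N : (exists n, P n) ->
  (forall n, P n -> (n <= N)%N) -> exists m, P m /\ forall n, P n -> (n <= m)%N.
Proof.
elim: N => [|N IH] [n hn] hb.
- exists n; split=>// k hk; have := hb k hk; have := hb n hn; lia.
- case: (classic (P N.+1)) => h.
  + by exists N.+1; split => // k hk; exact: hb.
  + apply: IH; first by exists n.
    move=> k hk; have := hb k hk; case: (k =P N.+1) => [e|ne]; [by subst | lia].
Qed.

Lemma prop_min (P : nat -> Prop) : (exists n, P n) ->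
  exists m, P m /\ forall n, P n -> (m <= n)%N.
Proof.
move=> [n hn].
suff: forall k n, (n <= k)%N -> P n -> exists m, P m /\ forall n, P n -> (m <= n)%N.
  by move=> /(_ n n (leqnn n) hn).
elim=> [|k IH] n' hle hP.
- exists n'; split=> // j _; lia.
- case: (classic (exists j, (j <= k)%N /\ P j)) => [[j [hj hPj]]|hno].
    exact: IH hj hPj.
  exists n'; split => // j hPj.
  case: (leqP j k) => hjk; first by exfalso; apply hno; exists j.
  lia.
Qed.

Lemma cmp0l {E : exactcat} (X Y Z : Obj E) (h : Defs.Hom Y Z) :
  (0%R : Defs.Hom X Y) ;; h = 0%R.
Proof.
have := cmpDl (0%R : Defs.Hom X Y) 0%R h; rewrite addr0 => e.
by apply: (addrI ((0%R : Defs.Hom X Y) ;; h)); rewrite addr0 -e.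
Qed.

Lemma cmp0r {E : exactcat} (X Y Z : Obj E) (h : Defs.Hom X Y) :
  h ;; (0%R : Defs.Hom Y Z) = 0%R.
Proof.
have := cmpDr h (0%R : Defs.Hom Y Z) 0%R; rewrite addr0 => e.
by apply: (addrI (h ;; (0%R : Defs.Hom Y Z))); rewrite addr0 -e.
Qed.

Lemma zero_from {E : exactcat} (Z Y : Obj E) (f : Defs.Hom Z Y) :
  is_zero Z -> f = 0%R.
Proof. by rewrite /is_zero => hz; rewrite -(cmp1l f) hz cmp0l. Qed.

Lemma iso_idm {E : exactcat} (X : Obj E) : is_iso (idm X).
Proof. by exists (idm X); rewrite cmp1l. Qed.

Lemma iso_adm {E : exactcat} (X Y : Obj E) (f : Defs.Hom X Y) :
  is_iso f -> adm_monic f.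
Proof.
move=> hf; have [Z [d hd]] := Ex_E0 Y; exists Z, d.
apply: (Ex_iso (a := f) (b := idm Y) (c := idm Z) hd) => //; try exact: iso_idm.
by rewrite cmp1l cmp1r.
Qed.

Lemma adm_comp {E : exactcat} (X Y Z : Obj E) (i : Defs.Hom X Y) (j : Defs.Hom Y Z) :
  adm_monic i -> adm_monic j -> adm_monic (i ;; j).
Proof. exact: Ex_E1. Qed.

Lemma subE_refl {E : exactcat} (X : Obj E) : subE X X.
Proof. by exists (idm X); apply: iso_adm; exact: iso_idm. Qed.

Lemma subE_trans {E : exactcat} (X Y Z : Obj E) : subE X Y -> subE Y Z -> subE X Z.
Proof. by move=> [i hi] [j hj]; exists (i ;; j); exact: adm_comp. Qed.

Lemma ker_id_zero {E : exactcat} (W X : Obj E) (i : Defs.Hom W X) :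
  Ex i (idm X) -> is_zero W.
Proof.
move=> /Ex_kercoker [[hi hk] _]; rewrite cmp1r in hi.
have [g [_ hu]] := hk W 0%R (cmp0l _ _ _ _).
rewrite /is_zero (hu (idm W)); last by rewrite cmp1l.
by symmetry; apply: hu; rewrite hi cmp0l.
Qed.

Lemma zero_sub {E : exactcat} (X : Obj E) :
  exists Z (i : Defs.Hom Z X), is_zero Z /\ adm_monic i.
Proof.
have [Z [i hi]] := Ex_E0op X; exists Z, i; split; first exact: ker_id_zero hi.
by exists X, (idm X).
Qed.

Lemma iso_zero {E : exactcat} (A B : Obj E) (f : Defs.Hom A B) :
  is_iso f -> is_zero A -> is_zero B.
Proof. by move=> [g [_ hgf]] hz; rewrite /is_zero -hgf (@zero_from _ _ _ f hz) cmp0r. Qed.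

Lemma chain_ex {E : exactcat} (X : Obj E) : exists n, chainE X n.
Proof.
have [Z [i [hz hi]]] := zero_sub X; case: (classic (is_iso i)) => h.
- by exists 0; constructor; exact: iso_zero h hz.
- exists 1; apply: (chainES (X := Z)); first by constructor.
  by exists i.
Qed.

Lemma length_ex {E : exactcat} (hfin : finiteE E) (X : Obj E) : exists n, lengthE X n.
Proof.
have [N hN] := hfin X; have [m [hm hmax]] := @prop_max (chainE X) N (chain_ex X) hN.
by exists m.
Qed.

Lemma length_uniq {E : exactcat} (X : Obj E) a b : lengthE X a -> lengthE X b -> a = b.
Proof. by move=> [ha hma] [hb hmb]; apply/eqP; rewrite eqn_leq (hmb _ ha) (hma _ hb). Qed.

Lemma psub_len {E : exactcat} (X Y : Obj E) a b :
  psubE X Y -> lengthE X a -> lengthE Y b -> (a < b)%N.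
Proof. by move=> hp [ha _] [_ hmb]; exact: hmb _ (chainES ha hp). Qed.

Lemma iso_inv {E : exactcat} (A B : Obj E) (f : Defs.Hom A B) : is_iso f ->
  exists g : Defs.Hom B A, is_iso g /\ f ;; g = idm A /\ g ;; f = idm B.
Proof. by move=> [g [h1 h2]]; exists g; split => //; exists f. Qed.

Lemma psub_iso {E : exactcat} (X A B : Obj E) (f : Defs.Hom A B) :
  is_iso f -> psubE X A -> psubE X B.
Proof.
move=> hf [j [hj hnj]]; have [g [hfg hgf]] := hf.
exists (j ;; f); split; first exact: adm_comp hj (iso_adm hf).
move=> [h [e1 e2]]; apply: hnj.
exists (f ;; h); split; first by rewrite -cmpA.
have e3 : (f ;; h ;; j) ;; f = f by rewrite !cmpA e2 cmp1r.
have -> : f ;; h ;; j = (f ;; h ;; j ;; f) ;; g.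
  by rewrite (cmpA (f ;; h ;; j) f g) hfg cmp1r.
by rewrite e3.
Qed.

Lemma chain_iso {E : exactcat} (A : Obj E) m : chainE A m ->
  forall B (f : Defs.Hom A B), is_iso f -> chainE B m.
Proof.
case => [X hz | X Y n hc hp] B f hf.
- by constructor; exact: iso_zero hf hz.
- apply: chainES hc _; exact: psub_iso hf hp.
Qed.

Lemma len_iso {E : exactcat} (A B : Obj E) (f : Defs.Hom A B) n :
  is_iso f -> lengthE A n -> lengthE B n.
Proof.
move=> hf [hc hm]; split; first exact: chain_iso hc _ _ hf.
move=> k hk; have [g [hg _]] := iso_inv hf; apply: hm; exact: chain_iso hk _ _ hg.
Qed.

Lemma sub_len {E : exactcat} (X Y : Obj E) a b :
  subE X Y -> lengthE X a -> lengthE Y b -> (a <= b)%N.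
Proof.
move=> [i hi] ha hb; case: (classic (is_iso i)) => h.
  by rewrite (length_uniq (len_iso h ha) hb).
by apply: ltnW; apply: psub_len _ ha hb; exists i.
Qed.

Lemma indec_iso {E : exactcat} (A B : Obj E) (f : Defs.Hom A B) :
  is_iso f -> indecomposable A -> indecomposable B.
Proof.
move=> hf [hnz hdec]; have [g [hg [hfg hgf]]] := iso_inv hf; split.
  by move=> hz; apply: hnz; exact: iso_zero hg hz.
move=> P Q [i1 [i2 [p1 [p2 [e1 e2 e3 e4 e5]]]]]; apply: hdec.
exists (i1 ;; g), (i2 ;; g), (f ;; p1), (f ;; p2); split.
- by rewrite cmpA -(cmpA g) hgf cmp1l e1.
- by rewrite cmpA -(cmpA g) hgf cmp1l e2.
- by rewrite cmpA -(cmpA g) hgf cmp1l e3.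
- by rewrite cmpA -(cmpA g) hgf cmp1l e4.
- by rewrite !cmpA -cmpDr -(cmpA p1) -(cmpA p2) -cmpDl e5 cmp1l hfg.
Qed.

Lemma ichain_iso {E : exactcat} (A : Obj E) t : ichain A t ->
  forall B (f : Defs.Hom A B), is_iso f -> ichain B t.
Proof.
case => [X n hi hl | X Y s n hc hp hi hl] B f hf.
- apply: ichain1; [exact: indec_iso hf hi | exact: len_iso hf hl].
- apply: ichainS hc _ _ _; [exact: psub_iso hf hp | exact: indec_iso hf hi
                          | exact: len_iso hf hl].
Qed.

Lemma ichain_shape {E : exactcat} (X : Obj E) t : ichain X t ->
  exists L, lengthE X L /\ subseq t (iota 0 L.+1).
Proof.
elim => [X0 n hi hl | X0 Y s n hc [L [hL hs]] hp hi hl].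
- exists n; split=> //; rewrite -addn1 iotaD add0n -[[:: n]]cat0s.
  apply: cat_subseq; [exact: sub0seq | exact: subseq_refl].
- exists n; split => //; have hlt := psub_len hp hL hl.
  rewrite -cats1 -addn1 iotaD add0n.
  apply: cat_subseq; last exact: subseq_refl.
  apply: subseq_trans hs _; exact: iota_sub.
Qed.

Lemma mem_ichain {E : exactcat} (X : Obj E) t L :
  ichain X t -> lengthE X L -> t \in allsubs (iota 0 L.+1).
Proof.
move=> ht hL; have [L' [hL' hs]] := ichain_shape ht.
by rewrite (length_uniq hL hL'); exact: allsubsP.
Qed.

Lemma mu_ex {E : exactcat} (hfin : finiteE E) (X : Obj E) :
  indecomposable X -> exists s, is_mu X s.
Proof.
move=> hi; have [L hL] := length_ex hfin X.
have [m [hm hmax]] := @lll_max (allsubs (iota 0 L.+1)) (ichain X)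
  (ex_intro _ [:: L] (conj (mem_ichain (ichain1 hi hL) hL) (ichain1 hi hL))).
exists m; split; first exact: hm.
move=> t ht; exact: hmax t (mem_ichain ht hL) ht.
Qed.

Lemma mu_mono {E : exactcat} (hfin : finiteE E) (X' X : Obj E) t s :
  indecomposable X' -> indecomposable X -> subE X' X -> is_mu X' t -> is_mu X s ->
  lll t s.
Proof.
move=> hi' hi [i hadm] [ht _] [_ hs]; case: (classic (is_iso i)) => h.
  exact: hs (ichain_iso ht h).
have [n hn] := length_ex hfin X.
have hp : psubE X' X by exists i.
have hc := ichainS ht hp hi hn.
apply: lll_trans (hs _ hc); by rewrite -cats1 lll_cat.
Qed.

Lemma bip_adm2 {E : exactcat} (A B S : Obj E) (i1 : Defs.Hom A S) (i2 : Defs.Hom B S)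
  (p1 : Defs.Hom S A) (p2 : Defs.Hom S B) :
  i1 ;; p1 = idm A -> i2 ;; p2 = idm B -> i1 ;; p2 = 0%R -> i2 ;; p1 = 0%R ->
  (p1 ;; i1 + p2 ;; i2)%R = idm S -> adm_monic i2.
Proof.
move=> e1 e2 e3 e4 e5.
have [Z [i [hz hi]]] := zero_sub A.
have [Y' [f' [i' [[hcomm hpo] hi']]]] := Ex_E2 (0%R : Defs.Hom Z B) hi.
have [u [[hu1 hu2] _]] := hpo S i1 i2 (etrans (@zero_from _ _ _ _ hz) (esym (cmp0l _ _ _ _))).
pose v := (p1 ;; f' + p2 ;; i')%R.
have huv : u ;; v = idm Y'.
  have [u0 [_ huniq]] := hpo Y' f' i' hcomm.
  rewrite (huniq (idm Y')) ?cmp1r //; apply: huniq.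
  - by rewrite -cmpA hu1 /v cmpDr -!cmpA e1 e3 cmp1l cmp0l addr0.
  - by rewrite -cmpA hu2 /v cmpDr -!cmpA e4 e2 cmp1l cmp0l add0r.
have hvu : v ;; u = idm S by rewrite /v cmpDl !cmpA hu1 hu2 e5.
rewrite -hu2; apply: adm_comp hi' (iso_adm _); by exists v.
Qed.

Lemma bip_notiso {E : exactcat} (A B S : Obj E) (i1 : Defs.Hom A S) (i2 : Defs.Hom B S)
  (p1 : Defs.Hom S A) :
  i1 ;; p1 = idm A -> i2 ;; p1 = 0%R -> is_iso i2 -> is_zero A.
Proof.
move=> e1 e4 [h [eh1 eh2]]; rewrite /is_zero -e1.
have -> : i1 = (i1 ;; h) ;; i2 by rewrite cmpA eh2 cmp1r.
by rewrite cmpA e4 cmp0r.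
Qed.

Lemma indec_sub {E : exactcat} (hfin : finiteE E) (X : Obj E) :
  ~ is_zero X -> exists X0, indecomposable X0 /\ subE X0 X.
Proof.
move=> hX.
pose P n := exists X', [/\ ~ is_zero X', subE X' X & lengthE X' n].
have [L hL] := length_ex hfin X.
have hex : exists n, P n by exists L, X; split => //; exact: subE_refl.
have [m [[X' [hnz hsub hl]] hmin]] := @prop_min P hex.
exists X'; split => //; split => // A B [i1 [i2 [p1 [p2 [e1 e2 e3 e4 e5]]]]].
case: (classic (is_zero A)) => hA; [by left | right].
case: (classic (is_zero B)) => hB //; exfalso.
have hps : psubE A X'.
  exists i1; split.
    apply: (@bip_adm2 _ _ _ _ i2 i1 p2 p1) => //.
    by rewrite addrC.
  by move=> hiso; apply: hB; exact: (@bip_notiso _ _ _ _ i2 i1 p2) e2 e3 hiso.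
have [a ha] := length_ex hfin A.
have hlt := psub_len hps ha hl.
have hAX : subE A X by case: hps => [j [hj _]]; apply: subE_trans hsub; exists j.
have := hmin a (ex_intro _ A (And3 hA hAX ha)); lia.
Qed.

Lemma mem_sub {E : exactcat} (hfin : finiteE E) (X X' : Obj E) u L :
  subE X' X -> is_mu X' u -> lengthE X L -> u \in allsubs (iota 0 L.+1).
Proof.
move=> hsub [hc _] hL; have [L' hL'] := length_ex hfin X'.
have [L'' [hL'' hs]] := ichain_shape hc.
rewrite -(length_uniq hL' hL'') in hs.
have hle := sub_len hsub hL' hL.
apply: allsubsP; apply: subseq_trans hs _; apply: iota_sub; lia.
Qed.

Unset Implicit Arguments.


Theorem proposition7p16 (E : exactcat) (hfin : finiteE E) :
  (* the extended mu_E is well defined on nonzero objects *)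
  (forall X : Obj E, ~ is_zero X -> exists s, is_mu_ext X s) /\
  (* it agrees with mu_E on indecomposable objects *)
  (forall (X : Obj E) s, indecomposable X -> (is_mu X s <-> is_mu_ext X s)) /\
  (* it is a measure: X \subset_E Y implies mu_E(X) <<< mu_E(Y) *)
  (forall (X Y : Obj E) s t, ~ is_zero X -> ~ is_zero Y -> subE X Y ->
      is_mu_ext X s -> is_mu_ext Y t -> lll s t).
Proof.
split; [|split].
- move=> X hX; have [X0 [hi0 hs0]] := indec_sub hfin hX.
  have [s0 hmu0] := mu_ex hfin hi0; have [L hL] := length_ex hfin X.
  pose P u := exists X', [/\ indecomposable X', subE X' X & is_mu X' u].
  have hex : exists x, x \in allsubs (iota 0 L.+1) /\ P x.
    exists s0; split; first by have := mem_sub hfin hs0 hmu0 hL.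
    by exists X0.
  have [m [[X' [h1 h2 h3]] hmax]] := @lll_max _ P hex.
  exists m; split; first by exists X'.
  move=> X'' t hi hs hm; apply: hmax; last by exists X''.
  by have := mem_sub hfin hs hm hL.
- move=> X s hi; split.
  + move=> hmu; split; first by exists X; split => //; exact: subE_refl.
    move=> X' t hi' hs' hm'; exact (mu_mono hfin hi' hi hs' hm' hmu).
  + move=> [[X' [hi' hs' hm']] hmax]; have [s0 hm0] := mu_ex hfin hi.
    have h1 := hmax X s0 hi (subE_refl X) hm0.
    have h2 := mu_mono hfin hi' hi hs' hm' hm0.
    by rewrite -(@lll_anti _ _ h1 h2).
- move=> X Y s t _ _ hXY [[X' [hi' hs' hm']] _] [_ hmax].
  exact: hmax hi' (subE_trans hs' hXY) hm'.
Qed.
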